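(* Let $(R,m)$ and $(T,\eta)$ be Noetherian local rings and let $R\to T$ be a finite local ring homomorphism such that $T$ is a free $R$-module and $T/mT$ is Gorenstein. Let $J\subseteq T$ be an ideal and let $h:R\to T/J$ be the composite of $R\to T$ with the projection $T\to T/J$, so that $T/J$ carries the $R$-module structure induced from $T$. Then $h$ splits, i.e. there exists an $R$-linear map $\rho:T/J\to R$ with $\rho(1)=1$, if and only if $\mathrm{Ann}_TJ\not\subseteq mT$.
   Context: All rings are commutative with identity. *)

(* Defs.v *)
From HB Require Import structures.
From mathcomp Require Import all_boot all_order all_algebra.
Set Implicit Arguments. Unset Strict Implicit. Unset Printing Implicit Defensive.
Import Order.TTheory GRing.Theory Num.Theory.
Local Open Scope ring_scope.

Definition is_ideal (A : comPzRingType) (I : A -> Prop) : Prop :=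
  [/\ I 0, (forall x y, I x -> I y -> I (x + y)) & (forall a x, I x -> I (a * x))].

(* The set of non-units; for a comUnitRingType (nontrivial) ring, the ring is
   local iff this set is an ideal, and then it is the unique maximal ideal. *)
Definition nonunit (A : comUnitRingType) (x : A) : Prop := ~~ (x \is a GRing.unit).

Definition is_local (A : comUnitRingType) : Prop := is_ideal (@nonunit A).

Definition noetherian (A : comPzRingType) : Prop :=
  forall I : nat -> A -> Prop, (forall n, is_ideal (I n)) ->
    (forall n x, I n x -> I n.+1 x) ->
    exists N, forall n, (N <= n)%N -> forall x, I n x -> I N x.

Definition noetherian_local (A : comUnitRingType) : Prop :=
  noetherian A /\ is_local A.

Section Ext.
Variables (R T : comUnitRingType) (f : {rmorphism R -> T}).

Definition local_hom : Prop := forall r, nonunit r -> nonunit (f r).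

Definition module_finite : Prop :=
  exists n (g : 'I_n -> T), forall t, exists c : 'I_n -> R,
    t = \sum_(i < n) f (c i) * g i.

Definition module_free : Prop :=
  exists (I : eqType) (e : I -> T),
    (forall t, exists (s : seq I) (c : I -> R), t = \sum_(i <- s) f (c i) * e i) /\
    (forall (s : seq I) (c : I -> R), uniq s ->
        \sum_(i <- s) f (c i) * e i = 0 -> forall i, i \in s -> c i = 0).

Definition mT (t : T) : Prop :=
  exists s : seq (R * T), all (fun p => ~~ (p.1 \is a GRing.unit)) s /\
    t = \sum_(p <- s) f p.1 * p.2.

(* T/mT is an Artinian local ring (finite over the field
   R/m, with maximal ideal η/mT), so Gorenstein means type 1: its socle
   (0 :_{T/mT} η/mT) is a 1-dimensional vector space over the residue field,
   i.e. it is nonzero and generated by a single element s.  Written in T: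
   socle = {t | η t ⊆ mT} / mT. *)
Definition in_fiber_socle (t : T) : Prop := forall u : T, nonunit u -> mT (u * t).

Definition closed_fiber_gorenstein : Prop :=
  exists s : T, [/\ ~ mT s, in_fiber_socle s &
    forall t, in_fiber_socle t -> exists a : T, mT (t - a * s)].

(* h : R -> T/J splits: an R-linear map rho : T/J -> R with rho(1) = 1.
   Such maps correspond exactly to R-linear maps T -> R vanishing on J. *)
Definition splits (J : T -> Prop) : Prop :=
  exists rho : T -> R,
    [/\ (forall x y, rho (x + y) = rho x + rho y),
        (forall r x, rho (f r * x) = r * rho x),
        (forall j, J j -> rho j = 0) &
        rho 1 = 1].

Definition ann (J : T -> Prop) (t : T) : Prop := forall j, J j -> t * j = 0.

End Ext.

(* Main.v *)
Require Import Defs.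
From HB Require Import structures.
From Stdlib Require Import Classical ClassicalEpsilon.
From mathcomp Require Import all_boot all_order all_algebra.
From mathcomp Require Import generic_quotient ring_quotient.
Set Implicit Arguments. Unset Strict Implicit. Unset Printing Implicit Defensive.
Import Order.TTheory GRing.Theory Num.Theory.
Local Open Scope ring_scope.

Section Local.
Variable A : comUnitRingType.
Hypothesis HA : is_local A.

Lemma nu0 : nonunit (0 : A). Proof. by case: HA. Qed.
Lemma nuD (x y : A) : nonunit x -> nonunit y -> nonunit (x + y).
Proof. by case: HA => _ H _; apply: H. Qed.
Lemma nuM (a x : A) : nonunit x -> nonunit (a * x).
Proof. by case: HA => _ _ H; apply: H. Qed.
Lemma nuMr (a x : A) : nonunit x -> nonunit (x * a).
Proof. by rewrite mulrC; apply: nuM. Qed.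
Lemma nuN (x : A) : nonunit x -> nonunit (- x).
Proof. by move=> h; rewrite -mulN1r; apply: nuM. Qed.
Lemma nuB (x y : A) : nonunit x -> nonunit y -> nonunit (x - y).
Proof. by move=> h1 h2; apply: nuD => //; apply: nuN. Qed.
Lemma nu_sum (I : Type) (s : seq I) (P : pred I) (F : I -> A) :
  (forall i, P i -> nonunit (F i)) -> nonunit (\sum_(i <- s | P i) F i).
Proof.
move=> h; apply: (big_ind (fun x => nonunit x)) => //; first exact: nu0.
exact: nuD.
Qed.
Lemma unit_addnu (u y : A) : u \is a GRing.unit -> nonunit y -> (u + y) \is a GRing.unit.
Proof.
move=> hu hy; apply/negPn/negP => h.
have : nonunit ((u + y) - y) by apply: nuB.
by rewrite addrK /nonunit hu.
Qed.
Lemma nu1 : ~ nonunit (1 : A). Proof. by rewrite /nonunit unitr1. Qed.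
End Local.

Section Basis.
Variables (R T : comUnitRingType) (f : {rmorphism R -> T}).
Hypotheses (Hfin : module_finite f) (Hfree : module_free f).

Lemma finite_basis : exists n (b : 'I_n.+1 -> T),
  (forall t, exists c : 'I_n.+1 -> R, t = \sum_i f (c i) * b i) /\
  (forall c : 'I_n.+1 -> R, \sum_i f (c i) * b i = 0 -> forall i, c i = 0).
Proof.
case: Hfree => I [e [Hspan Hind]].
case: Hfin => N [g Hg].
have [S HS] := fin_all_exists (fun i : 'I_N => Hspan (g i)).
have [C HC] := fin_all_exists HS.
pose B := undup (flatten [seq S i | i <- enum 'I_N]).
have uB : uniq B by apply: undup_uniq.
pose V t := exists c : I -> R, t = \sum_(k <- B) f (c k) * e k.
have V0 : V 0 by exists (fun _ => 0); rewrite big1 // => k _; rewrite rmorph0 mul0r.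
have VD : forall x y, V x -> V y -> V (x + y).
  move=> x y [c1 ->] [c2 ->]; exists (fun k => c1 k + c2 k).
  by rewrite -big_split /=; apply: eq_bigr => k _; rewrite rmorphD mulrDl.
have VZ : forall r x, V x -> V (f r * x).
  move=> r x [c ->]; exists (fun k => r * c k).
  by rewrite mulr_sumr; apply: eq_bigr => k _; rewrite rmorphM mulrA.
have Ve : forall k, k \in B -> V (e k).
  move=> k kB; exists (fun k' => if k' == k then 1 else 0).
  rewrite (bigD1_seq k) //= eqxx rmorph1 mul1r big1 ?addr0 // => k' /negPf ->.
  by rewrite rmorph0 mul0r.
have VT : forall t, V t.
  move=> t; have [c ->] := Hg t.
  apply: (big_ind V) => // i _; apply: (VZ).
  rewrite (HC i) big_seq; apply: (big_ind V) => // k kS; apply: (VZ); apply: (Ve).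
  rewrite mem_undup; apply/flatten_mapP; exists i => //; exact: mem_enum.
case EB : B => [|x0 B'].
  have [c] := VT 1; rewrite EB big_nil => /eqP; by rewrite oner_eq0.
have {}uB : uniq (x0 :: B') by rewrite -EB.
have {}VT : forall t, exists c : I -> R, t = \sum_(k <- x0 :: B') f (c k) * e k.
  by move=> t; have [c ->] := VT t; exists c; rewrite EB.
clear EB V0 VD VZ Ve.
exists (size B'), (fun i => e (nth x0 (x0 :: B') i)); split.
  move=> t; have [c ->] := VT t; exists (fun i => c (nth x0 (x0 :: B') i)).
  by rewrite (big_nth x0) big_mkord.
move=> d Hd i.
pose c k := d (inord (index k (x0 :: B'))).
have Hc : \sum_(k <- x0 :: B') f (c k) * e k = 0.
  rewrite (big_nth x0) big_mkord -[RHS]Hd; apply: eq_bigr => j _.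
  by rewrite /c index_uniq // inord_val.
have := Hind _ c uB Hc (nth x0 (x0 :: B') i).
rewrite /c index_uniq ?inord_val // => ->; rewrite // mem_nth //.
Qed.
End Basis.

Section MT.
Variables (R T : comUnitRingType) (f : {rmorphism R -> T}).

Lemma mT0 : mT f 0. Proof. by exists [::]; rewrite big_nil. Qed.
Lemma mTD x y : mT f x -> mT f y -> mT f (x + y).
Proof.
move=> [s1 [h1 ->]] [s2 [h2 ->]]; exists (s1 ++ s2).
by rewrite all_cat h1 h2 big_cat.
Qed.
Lemma mTM a x : mT f x -> mT f (a * x).
Proof.
move=> [s [h ->]]; exists [seq (p.1, a * p.2) | p <- s]; split.
  by rewrite all_map.
by rewrite big_map mulr_sumr; apply: eq_bigr => p _ /=; rewrite mulrCA.
Qed.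
Lemma mTMr a x : mT f x -> mT f (x * a).
Proof. by rewrite mulrC; apply: mTM. Qed.
Lemma mTN x : mT f x -> mT f (- x).
Proof. by move=> h; rewrite -mulN1r; apply: mTM. Qed.
Lemma mTB x y : mT f x -> mT f y -> mT f (x - y).
Proof. by move=> h1 h2; apply: mTD => //; apply: mTN. Qed.
Lemma mT_f r x : nonunit r -> mT f (f r * x).
Proof. by move=> h; exists [:: (r, x)]; rewrite /= big_seq1 andbT. Qed.
Lemma mT_sum (I : Type) (s : seq I) (P : pred I) (F : I -> T) :
  (forall i, P i -> mT f (F i)) -> mT f (\sum_(i <- s | P i) F i).
Proof.
move=> h; apply: (big_ind (fun x => mT f x)) => //; first exact: mT0.
exact: mTD.
Qed.
End MT.

Section Coord.
Variables (R T : comUnitRingType) (f : {rmorphism R -> T}).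
Variables (n : nat) (b : 'I_n.+1 -> T).
Hypothesis Hspan : forall t, exists c : 'I_n.+1 -> R, t = \sum_i f (c i) * b i.
Hypothesis Hind : forall c : 'I_n.+1 -> R, \sum_i f (c i) * b i = 0 -> forall i, c i = 0.

Lemma coord_ex t : exists c : {ffun 'I_n.+1 -> R}, t == \sum_i f (c i) * b i.
Proof.
have [c ->] := Hspan t; exists (finfun c); apply/eqP.
by apply: eq_bigr => i _; rewrite ffunE.
Qed.

Definition coord t : 'I_n.+1 -> R := fun i => xchoose (coord_ex t) i.

Lemma coordP t : t = \sum_i f (coord t i) * b i.
Proof. exact/eqP/(xchooseP (coord_ex t)). Qed.

Lemma coord_uniq t (c : 'I_n.+1 -> R) : t = \sum_i f (c i) * b i ->
  forall i, coord t i = c i.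
Proof.
move=> ht i; apply/eqP; rewrite -subr_eq0; apply/eqP.
apply: (Hind (c := fun i => coord t i - c i)) => //.
rewrite (eq_bigr (fun i => f (coord t i) * b i - f (c i) * b i)).
  by rewrite sumrB -coordP -ht subrr.
by move=> j _; rewrite rmorphB mulrBl.
Qed.

Lemma coordD x y i : coord (x + y) i = coord x i + coord y i.
Proof.
apply: (coord_uniq (c := fun j => coord x j + coord y j)).
rewrite {1}(coordP x) {1}(coordP y) -big_split /=.
by apply: eq_bigr => j _; rewrite rmorphD mulrDl.
Qed.

Lemma coordZ r x i : coord (f r * x) i = r * coord x i.
Proof.
apply: (coord_uniq (c := fun j => r * coord x j)); rewrite {1}(coordP x) mulr_sumr.
by apply: eq_bigr => j _; rewrite rmorphM mulrA.
Qed.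

Lemma coord0 i : coord 0 i = 0.
Proof. by apply: (coord_uniq (c := fun _ => 0)); rewrite big1 // => j _; rewrite rmorph0 mul0r. Qed.

Lemma coordN x i : coord (- x) i = - coord x i.
Proof. by rewrite -mulN1r -(rmorphN1 f) coordZ mulN1r. Qed.

Lemma coordB x y i : coord (x - y) i = coord x i - coord y i.
Proof. by rewrite coordD coordN. Qed.

Lemma coord_sum (I : Type) (s : seq I) (P : pred I) (F : I -> T) i :
  coord (\sum_(k <- s | P k) F k) i = \sum_(k <- s | P k) coord (F k) i.
Proof.
apply: (big_ind2 (fun x y => coord x i = y)); first exact: coord0.
  by move=> x1 y1 x2 y2 <- <-; rewrite coordD.
by [].
Qed.

Lemma coord_b j i : coord (b j) i = (j == i)%:R.
Proof.
apply: (coord_uniq (c := fun i => (j == i)%:R)); rewrite (bigD1 j) //= eqxx rmorph1 mul1r big1 ?addr0 //.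
by move=> k /negPf; rewrite eq_sym => ->; rewrite rmorph0 mul0r.
Qed.

Hypothesis HR : is_local R.

Lemma mT_coord t : mT f t -> forall i, nonunit (coord t i).
Proof.
move=> [s [hs ->]] i; rewrite coord_sum big_seq; apply: (nu_sum HR) => p ps.
rewrite coordZ; apply: (nuMr HR).
exact: (allP hs p ps).
Qed.

Lemma coord_mT t : (forall i, nonunit (coord t i)) -> mT f t.
Proof.
move=> h; rewrite (coordP t); apply: mT_sum => i _; exact: mT_f.
Qed.

Lemma not_mT_unit t : ~ mT f t -> exists i, coord t i \is a GRing.unit.
Proof.
move=> h; case: (boolP [exists i, coord t i \is a GRing.unit]) => [/existsP //|].
rewrite negb_exists => /forallP H.
by case: h; apply: coord_mT => i; apply: H.
Qed.
End Coord.

Section Nil.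
Variables (R T : comUnitRingType) (f : {rmorphism R -> T}).
Variables (n : nat) (b : 'I_n.+1 -> T).
Hypothesis Hspan : forall t, exists c : 'I_n.+1 -> R, t = \sum_i f (c i) * b i.
Hypothesis Hind : forall c : 'I_n.+1 -> R, \sum_i f (c i) * b i = 0 -> forall i, c i = 0.
Local Notation cd := (coord Hspan).
Local Notation cdD := (coordD Hspan Hind).
Local Notation cdZ := (coordZ Hspan Hind).
Local Notation cd0 := (coord0 Hspan Hind).
Local Notation cd_sum := (coord_sum Hspan Hind).
Local Notation cd_b := (coord_b Hspan Hind).

Definition Lm (x : T) : 'M[R]_n.+1 := \matrix_(i, j) cd (x * b i) j.

Lemma LmM x y : Lm (x * y) = Lm x * Lm y.
Proof.
apply/matrixP => i k; rewrite -mulmxE !mxE.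
have -> : x * y * b i = \sum_j f (cd (x * b i) j) * (y * b j).
  rewrite mulrAC {1}(coordP Hspan (x * b i)) mulr_suml; apply: eq_bigr => j _.
  by rewrite -mulrA (mulrC (b j)).
rewrite cd_sum; apply: eq_bigr => j _; rewrite cdZ !mxE //.
Qed.

Lemma LmD x y : Lm (x + y) = Lm x + Lm y.
Proof. by apply/matrixP => i k; rewrite !mxE mulrDl cdD. Qed.

Lemma Lm0 : Lm 0 = 0.
Proof. by apply/matrixP => i k; rewrite !mxE mul0r cd0. Qed.

Lemma Lm_f r : Lm (f r) = r%:M.
Proof.
by apply/matrixP => i k; rewrite !mxE cdZ cd_b mulr_natr.
Qed.

Lemma Lm_exp x k : Lm (x ^+ k) = Lm x ^+ k.
Proof.
elim: k => [|k IH]; first by rewrite !expr0 -(rmorph1 f) Lm_f.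
by rewrite !exprS LmM IH.
Qed.

Lemma Lm_sum (I : Type) (s : seq I) (P : pred I) (F : I -> T) :
  Lm (\sum_(k <- s | P k) F k) = \sum_(k <- s | P k) Lm (F k).
Proof. by apply: (big_morph Lm LmD Lm0). Qed.

Lemma Lm_inj0 z : Lm z = 0 -> z = 0.
Proof.
move=> hz; have zb : forall i, z * b i = 0.
  move=> i; rewrite (coordP Hspan (z * b i)) big1 // => j _.
  by have := congr1 (fun M : 'M[R]_n.+1 => M i j) hz; rewrite !mxE => ->; rewrite rmorph0 mul0r.
by rewrite -[z]mulr1 (coordP Hspan 1) mulr_sumr big1 // => i _; rewrite mulrCA zb mulr0.
Qed.

Lemma scalar_inj : injective (fun a : R => (a%:M : 'M[R]_n.+1)).
Proof.
move=> a c /= h; have := congr1 (fun M : 'M[R]_n.+1 => M ord0 ord0) h.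
by rewrite !mxE eqxx !mulr1n.
Qed.

Lemma integral_eq x :
  \sum_(k < size (char_poly (Lm x))) f ((char_poly (Lm x))`_k) * x ^+ k = 0.
Proof.
apply: Lm_inj0; rewrite Lm_sum.
have := Cayley_Hamilton (Lm x).
rewrite /horner_mx /horner_morph (horner_coef_wide _ (leqnn _)).
rewrite size_map_inj_poly; last 2 first.
- exact: scalar_inj.
- by apply/matrixP => i j; rewrite !mxE mul0rn.
move=> H; rewrite -[RHS]H; apply: eq_bigr => k _.
by rewrite LmM Lm_f Lm_exp coef_map_id0 //= raddf0.
Qed.

Lemma nilp (HR : is_local R) (HT : is_local T) x : nonunit x ->
  exists N, mT f (x ^+ N).
Proof.
move=> hx.
have Hz := integral_eq x.
move: Hz; set p := char_poly (Lm x) => Hz.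
have sp : size p = n.+2 := size_char_poly _.
have hlead : p`_n.+1 = 1.
  have /monicP := char_poly_monic (Lm x); rewrite -/p /lead_coef sp //.
have ex : exists k, p`_k \is a GRing.unit by exists n.+1; rewrite hlead unitr1.
case: (ex_minnP ex) => j hj hmin.
have hjn1 : (j <= n.+1)%N by apply: hmin; rewrite hlead unitr1.
have hjn : (j <= n.+2)%N by apply: leq_trans hjn1 _.
exists j.
pose F k := f p`_k * x ^+ k.
rewrite -(big_mkord xpredT F) sp (@big_cat_nat _ _ _ j) //= in Hz.
set A := \sum_(0 <= k < j) F k in Hz.
have hA : mT f A.
  rewrite /A big_nat_cond; apply: mT_sum => k /andP [/andP [_ hk] _].
  apply: mT_f; apply/negP => /hmin; rewrite leqNgt hk.
  done.
rewrite -{1}(add0n j) big_addn in Hz.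
pose v := \sum_(0 <= k < n.+2 - j) f p`_(k + j) * x ^+ k.
have hB : \sum_(0 <= k < n.+2 - j) F (k + j) = x ^+ j * v.
  rewrite /v mulr_sumr; apply: eq_bigr => k _.
  by rewrite /F exprD mulrA mulrC.
have hv : v \is a GRing.unit.
  rewrite /v big_ltn ?subn_gt0 //.
  rewrite expr0 mulr1 add0n; apply: (unit_addnu HT); first exact: rmorph_unit.
  rewrite big_nat_cond; apply: (nu_sum HT) => -[|k] /andP [/andP [hk _] _] //.
  by rewrite exprS; apply: (nuM HT); apply: (nuMr HT).
have hxv : x ^+ j * v = - A.
  by apply/eqP; rewrite -addr_eq0 addrC -hB Hz.
rewrite -(mulrK hv (x ^+ j)); apply: mTMr; rewrite hxv; exact: mTN.
Qed.
End Nil.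

Section Socle.
Variables (R T : comUnitRingType) (f : {rmorphism R -> T}).
Variables (n : nat) (b : 'I_n.+1 -> T).
Hypothesis Hspan : forall t, exists c : 'I_n.+1 -> R, t = \sum_i f (c i) * b i.
Hypothesis Hind : forall c : 'I_n.+1 -> R, \sum_i f (c i) * b i = 0 -> forall i, c i = 0.
Hypotheses (HR : is_local R) (HT : is_local T) (HTn : noetherian T).
Variable s0 : T.
Hypothesis hs0 : in_fiber_socle f s0.
Hypothesis hgen : forall t, in_fiber_socle f t -> exists a : T, mT f (t - a * s0).

Definition Ann (a : T) (y : T) : Prop := mT f (y * a).

Lemma Ann_ideal a : is_ideal (Ann a).
Proof.
split; rewrite /Ann.
- by rewrite mul0r; apply: mT0.
- by move=> x y hx hy; rewrite mulrDl; apply: mTD.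
- by move=> c x hx; rewrite -mulrA; apply: mTM.
Qed.

Lemma max_ann t : ~ mT f t -> exists a, ((exists x, a = t * x) /\ ~ mT f a) /\
  forall c, ((exists x, c = t * x) /\ ~ mT f c) ->
    (forall y, Ann a y -> Ann c y) -> forall y, Ann c y -> Ann a y.
Proof.
move=> ht; set S := fun a => (exists x, a = t * x) /\ ~ mT f a.
apply: NNPP => H.
have step : forall a : {a | S a}, {c : {a | S a} |
   (forall y, Ann (sval a) y -> Ann (sval c) y) /\
   exists y, Ann (sval c) y /\ ~ Ann (sval a) y}.
  move=> [a Sa]; apply: constructive_indefinite_description.
  apply: NNPP => H2; apply: H; exists a; split => // c Sc sub y Acy.
  apply: NNPP => nA; apply: H2; exists (exist _ c Sc); split => //.
  by exists y.
have S0 : S t by split => //; exists 1; rewrite mulr1.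
pose sq k := iter k (fun a => sval (step a)) (exist _ t S0).
have [N HN] := HTn (I := fun k => Ann (sval (sq k))) (fun k => Ann_ideal _)
  (fun k x hx => (proj1 (svalP (step (sq k))) x hx)).
have [y [hy1 hy2]] := proj2 (svalP (step (sq N))).
by apply: hy2; apply: (HN N.+1 (leqnSn N)).
Qed.

Lemma socle_reach t : ~ mT f t -> exists x, mT f (t * x - s0).
Proof.
move=> ht; have [a [[[x ->] hna] hmax]] := max_ann ht.
have soc : in_fiber_socle f (t * x).
  move=> u hu; apply: NNPP => hua.
  have hk : forall k, ~ mT f (u ^+ k * (t * x)).
    elim=> [|k IH]; first by rewrite expr0 mul1r.
    have Sb : (exists z, u ^+ k * (t * x) = t * z) /\ ~ mT f (u ^+ k * (t * x)).
      by split; [exists (x * u ^+ k); rewrite mulrCA (mulrC x) | exact: IH].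
    have sub : forall y, Ann (t * x) y -> Ann (u ^+ k * (t * x)) y.
      by move=> y hy; rewrite /Ann mulrCA; apply: mTM.
    move=> hk1; apply: hua.
    have := hmax _ Sb sub u; rewrite /Ann; apply.
    by rewrite mulrA -exprS.
  have [N hN] := nilp Hspan Hind HR HT hu.
  by apply: (hk N); apply: mTMr.
have [c hc] := hgen soc.
have cu : c \is a GRing.unit.
  apply: NNPP => hcn; apply: hna.
  have -> : t * x = (t * x - c * s0) + c * s0 by rewrite subrK.
  by apply: mTD => //; apply: hs0; apply/negP.
exists (x * c^-1).
have -> : t * (x * c^-1) - s0 = c^-1 * (t * x - c * s0).
  rewrite mulrBr [c^-1 * (c * s0)]mulrA mulVr // mul1r; congr (_ - _).
  by rewrite mulrA mulrC.
exact: mTM.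
Qed.
End Socle.

Local Open Scope quotient_scope.

Definition mpred (R : comUnitRingType) (HR : is_local R) : R -> bool :=
  fun x => x \notin GRing.unit.

Lemma mpred_closed (R : comUnitRingType) (HR : is_local R) : idealr_closed (mpred HR).
Proof.
split; rewrite /mpred ?inE /=.
- exact: (nu0 HR).
- by rewrite unfold_in /mpred /= unitr1.
- move=> a u v hu hv; apply: (nuD HR); last exact: hv.
  exact: (nuM HR).
Qed.

HB.instance Definition _ (R : comUnitRingType) (HR : is_local R) :=
  isIdealr.Build R (mpred HR) (mpred_closed HR).

Definition Qr (R : comUnitRingType) (HR : is_local R) :=
  {ideal_quot (Idealr.clone R (mpred HR) _)}.
Definition resf (R : comUnitRingType) (HR : is_local R) := Qr HR.
HB.instance Definition _ (R : comUnitRingType) (HR : is_local R) :=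
  GRing.ComNzRing.on (resf HR).

Section Res.
Variables (R : comUnitRingType) (HR : is_local R).
Local Notation Q := (Qr HR).
Local Notation K := (resf HR).

Definition pi0 : {rmorphism R -> Q} := \pi_Q.

Lemma pi0E x y : (pi0 x == pi0 y) = (x - y \notin GRing.unit).
Proof. by rewrite /pi0 -Quotient.idealrBE. Qed.

Lemma pi0_repr (q : Q) : pi0 (repr q) = q.
Proof. exact: reprK. Qed.

Definition kinv (x : K) : K := pi0 ((repr (x : Q))^-1).

Lemma kmulVf (x : K) : x != 0 -> kinv x * x = 1.
Proof.
move=> hx.
have hu : repr (x : Q) \is a GRing.unit.
  apply: negbNE; have := pi0E (repr (x : Q)) 0.
  by rewrite subr0 pi0_repr rmorph0 => <-.
rewrite /kinv -{2}[x]pi0_repr.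
change (pi0 (repr (x : Q))^-1 * pi0 (repr (x : Q)) = 1 :> Q).
by rewrite -rmorphM mulVr // rmorph1.
Qed.

Lemma kinv0 : kinv 0 = 0.
Proof.
rewrite /kinv.
have hn : repr (0 : Q) \notin GRing.unit.
  by have := pi0E (repr (0 : Q)) 0; rewrite subr0 pi0_repr rmorph0 eqxx.
by rewrite invr_out // pi0_repr.
Qed.
End Res.

HB.instance Definition _ (R : comUnitRingType) (HR : is_local R) :=
  GRing.ComNzRing_isField.Build (resf HR) (@kmulVf R HR) (kinv0 HR).

Section Res2.
Variables (R : comUnitRingType) (HR : is_local R).
Definition pik : R -> resf HR := fun x => pi0 HR x.
HB.instance Definition _ := GRing.isZmodMorphism.Build R (resf HR) pik (rmorphB (pi0 HR)).
HB.instance Definition _ := GRing.isMonoidMorphism.Build R (resf HR) pik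
  (rmorph1 (pi0 HR), rmorphM (pi0 HR)).

Definition lift (q : resf HR) : R := repr (q : Qr HR).
Lemma pik_lift q : pik (lift q) = q.
Proof. exact: pi0_repr. Qed.
Lemma pik0 x : (pik x == 0) = (x \notin GRing.unit).
Proof. by have := pi0E HR x 0; rewrite subr0 rmorph0. Qed.

Lemma det_unit n (G : 'M[R]_n) :
  (forall c : 'rV[R]_n, (exists i, c 0 i \is a GRing.unit) ->
     exists j, (c *m G) 0 j \is a GRing.unit) -> \det G \is a GRing.unit.
Proof.
move=> H; apply/negPn/negP => hd.
have : \det (map_mx pik G) == 0 by rewrite det_map_mx pik0.
case/det0P => v nv hv.
have [i hi] : exists i, v 0 i != 0.
  apply/existsP; rewrite -negb_forall; apply: contra nv => /forallP h.
  by apply/eqP/matrixP => a j; rewrite ord1 mxE; apply/eqP; apply: h.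
pose c := map_mx lift v.
have hc : map_mx pik c = v by apply/matrixP => a j; rewrite !mxE pik_lift.
have hci : c 0 i \is a GRing.unit.
  by move: hi; rewrite mxE -{1}(pik_lift (v 0 i)) pik0 negbK.
have [j hj] := H c (ex_intro _ i hci).
move: hj; apply/negP; rewrite -pik0.
have := congr1 (fun M : 'rV_n => M 0 j) hv; rewrite -hc -map_mxM mxE => ->.
by rewrite mxE.
Qed.

End Res2.

Theorem theorem10 (R T : comUnitRingType) (f : {rmorphism R -> T})
  (J : T -> Prop) :
  noetherian_local R -> noetherian_local T ->
  local_hom f -> module_finite f -> module_free f ->
  closed_fiber_gorenstein f ->
  is_ideal J ->
  (splits f J <-> exists t, ann J t /\ ~ mT f t).
Proof.
move=> [_ HR] [HTno HT] _ Hfin Hfree [s0 [hs0n hs0 hgen]] [J0 JD JM].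
have [n [b [Hspan Hind]]] := finite_basis Hfin Hfree.
have [i0 hi0] := not_mT_unit Hspan hs0n.
pose psi x := coord Hspan x i0.
have psiD x y : psi (x + y) = psi x + psi y by apply: coordD.
have psiZ r x : psi (f r * x) = r * psi x by apply: coordZ.
have psi0 : psi 0 = 0 by apply: coord0.
have psi_sum : forall (I : Type) (s : seq I) (P : pred I) (F : I -> T),
    psi (\sum_(k <- s | P k) F k) = \sum_(k <- s | P k) psi (F k).
  by move=> *; apply: coord_sum.
have K1 : forall t, ~ mT f t -> exists x, psi (t * x) \is a GRing.unit.
  move=> t ht; have [x hx] := socle_reach Hspan Hind HR HT HTno hs0 hgen ht.
  exists x; have -> : t * x = s0 + (t * x - s0) by rewrite addrC subrK.
  by rewrite psiD; apply: (unit_addnu HR) => //; apply: (mT_coord Hspan Hind HR hx).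
pose G : 'M[R]_n.+1 := \matrix_(i, j) psi (b i * b j).
have key : forall c : 'rV[R]_n.+1, forall j,
    (c *m G) 0 j = psi ((\sum_i f (c 0 i) * b i) * b j).
  move=> c j; rewrite !mxE mulr_suml psi_sum; apply: eq_bigr => i _.
  by rewrite mxE -mulrA psiZ.
have Gu : G \in unitmx.
  rewrite unitmxE; apply: (det_unit HR) => c [i hi].
  set t := \sum_i f (c 0 i) * b i.
  have ht : ~ mT f t.
    move=> /(mT_coord Hspan Hind HR) /(_ i).
    by rewrite (coord_uniq Hspan Hind (c := fun i => c 0 i)) // /nonunit hi.
  have [x hx] := K1 t ht.
  case: (boolP [exists j, (c *m G) 0 j \is a GRing.unit]) => [/existsP //|].
  rewrite negb_exists => /forallP hn.
  suff : nonunit (psi (t * x)) by rewrite /nonunit hx.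
  rewrite (coordP Hspan x) mulr_sumr psi_sum.
  apply: (nu_sum HR) => j _; rewrite mulrCA psiZ; apply: (nuM HR).
  by have := hn j; rewrite key.
split.
- move=> [rho [rhoD rhoZ rhoJ rho1]].
  have rho0 : rho 0 = 0.
    by apply/eqP; rewrite -(subrr (rho 0)) -{2}(addr0 0) rhoD addrK.
  pose v : 'rV[R]_n.+1 := \row_j rho (b j).
  pose c := v *m invmx G.
  pose t := \sum_i f (c 0 i) * b i.
  have htb : forall j, psi (t * b j) = rho (b j).
    by move=> j; rewrite -key /c mulmxKV // mxE.
  have htx : forall x, psi (t * x) = rho x.
    move=> x; rewrite (coordP Hspan x) mulr_sumr psi_sum.
    rewrite (big_morph rho rhoD rho0); apply: eq_bigr => j _.
    by rewrite mulrCA psiZ htb rhoZ.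
  exists t; split.
  + move=> j hj.
    set w := t * j.
    pose d : 'rV[R]_n.+1 := \row_i coord Hspan w i.
    have hd : d *m G = 0.
      apply/matrixP => a k; rewrite ord1 key [X in _ = X]mxE.
      have -> : \sum_i f (d 0 i) * b i = w.
        by rewrite [RHS](coordP Hspan w); apply: eq_bigr => i _; rewrite mxE.
      rewrite /w -mulrA htx; apply: rhoJ; rewrite mulrC; exact: JM.
    have d0 : d = 0 by rewrite -(mulmxK Gu d) hd mul0mx.
    rewrite -/w (coordP Hspan w) big1 // => i _.
    have := congr1 (fun M : 'rV_n.+1 => M 0 i) d0; rewrite !mxE => ->.
    by rewrite rmorph0 mul0r.
  + move=> /(mT_coord Hspan Hind HR) /(_ i0).
    by have := htx 1; rewrite mulr1 rho1 => h; rewrite /nonunit -/(psi t) h unitr1.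
- move=> [t [hJ ht]].
  have [x hx] := K1 t ht.
  set u := psi (t * x) in hx.
  exists (fun y => u^-1 * psi (t * x * y)); split.
  + by move=> y z; rewrite mulrDr psiD mulrDr.
  + by move=> r y; rewrite mulrCA psiZ mulrCA.
  + by move=> j hj; rewrite -mulrA (mulrC x) mulrA hJ // mul0r psi0 mulr0.
  + by rewrite mulr1 mulVr.
Qed.
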